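(* Let $P$ be an abelian group, $s\in\mathbb R_{>0}$, and $h\colon P\to\mathbb R$ such that for all $L_0,\dots,L_r\in P$, as $|m|\to\infty$ with $m\in\mathbb Z^r$, $h(\sum_im_iL_i)=O(|m|^s)$ and $h(L_0+\sum_im_iL_i)-h(\sum_im_iL_i)=O(|m|^{s-1})$. Let $\hat h\colon P_{\mathbb R}\to\mathbb R$ be the unique function with $\hat h(L)=\limsup_{m\to\infty}m^{-s}h(mL)$ for $L\in P$, homogeneous of degree $s$ under $\mathbb R_{\ge0}$, and continuous on finite-dimensional subspaces. Fix $L_1,\dots,L_r\in P$, write $\hat h(x)=\hat h(\sum_ix_iL_i)$ and $f_m(x)=m^{-s}h(\sum_i\lfloor mx_i\rfloor L_i)$ for $x\in\mathbb R^r$, $m\in\mathbb N_{>0}$. Then: (i) for all $x\in\mathbb R^r$, $\hat h(x)=\limsup_{m\to\infty}f_m(x)$; (ii) if $\sigma\subset\mathbb R^r$ is an open convex cone such that $\lim_{m\to\infty}f_m(x)=\hat h(x)$ for all $x\in\sigma\cap\mathbb Z^r$, then $\lim_{m\to\infty}f_m(x)=\hat h(x)$ for all $x\in\overline\sigma$.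
   Context: $P_{\mathbb R}=P\otimes_{\mathbb Z}\mathbb R$, the image of $L\in P$ is still written $L$, and $|m|=\sum_i|m_i|$; the implied constants may depend on $L_0,\dots,L_r$. *)

(* Defs.v *)
From HB Require Import structures.
From mathcomp Require Import all_boot all_order all_algebra.
From mathcomp Require Import all_classical all_reals all_analysis.
Set Implicit Arguments. Unset Strict Implicit. Unset Printing Implicit Defensive.
Import Order.TTheory GRing.Theory Num.Theory.
Import numFieldNormedType.Exports.
Local Open Scope classical_set_scope.
Local Open Scope ring_scope.

Definition l1norm (R : realType) (r : nat) (m : 'I_r -> int) : R :=
  \sum_(i < r) `|m i|%:~R.

Definition zcomb (P : zmodType) (r : nat) (m : 'I_r -> int) (L : 'I_r -> P) : P :=
  \sum_(i < r) (L i *~ m i).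

Definition growth_hyp (R : realType) (P : zmodType) (s : R) (h : P -> R) : Prop :=
  forall (r : nat) (L0 : P) (L : 'I_r -> P),
    (exists C M : R, forall m : 'I_r -> int, M <= l1norm R m ->
        `|h (zcomb m L)| <= C * (l1norm R m) `^ s) /\
    (exists C M : R, forall m : 'I_r -> int, M <= l1norm R m ->
        `|h (L0 + zcomb m L) - h (zcomb m L)| <= C * (l1norm R m) `^ (s - 1)).

(* (V, iota) is P (x)_Z R: universal property of the tensor product with R
   among real vector spaces. *)
Definition is_tensor_R (R : realType) (P : zmodType) (V : lmodType R)
    (iota : {additive P -> V}) : Prop :=
  forall (W : lmodType R) (g : {additive P -> W}),
    exists f : {linear V -> W},
      (forall p, f (iota p) = g p) /\
      (forall f' : {linear V -> W}, (forall p, f' (iota p) = g p) -> f' =1 f).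

Definition is_hhat (R : realType) (P : zmodType) (s : R) (h : P -> R)
    (V : lmodType R) (iota : {additive P -> V}) (hh : V -> R) : Prop :=
  [/\
      (forall L : P, (hh (iota L))%:E =
         limn_esup (fun m : nat => (((m%:R) `^ s)^-1 * h (L *+ m))%:E)),
      (forall (t : R) (v : V), 0 <= t -> hh (t *: v) = t `^ s * hh v) &
      (forall (k : nat) (v : 'I_k -> V),
         continuous (fun y : 'rV[R]_k => hh (\sum_(j < k) y ord0 j *: v j)))].

Definition fseq (R : realType) (P : zmodType) (s : R) (h : P -> R) (r : nat)
    (L : 'I_r -> P) (m : nat) (x : 'rV[R]_r) : R :=
  ((m%:R) `^ s)^-1 * h (\sum_(i < r) (L i *~ Num.floor (m%:R * x ord0 i))).

Definition hhat_r (R : realType) (P : zmodType) (V : lmodType R)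
    (iota : {additive P -> V}) (hh : V -> R) (r : nat) (L : 'I_r -> P)
    (x : 'rV[R]_r) : R :=
  hh (\sum_(i < r) x ord0 i *: iota (L i)).

Definition open_convex_cone (R : realType) (r : nat) (sigma : set 'rV[R]_r) : Prop :=
  [/\ open sigma,
      (forall x y, sigma x -> sigma y -> forall t : R, 0 <= t <= 1 ->
          sigma (t *: x + (1 - t) *: y)) &
      (forall x, sigma x -> forall t : R, 0 < t -> sigma (t *: x))].

Definition intpoint (R : realType) (r : nat) (x : 'rV[R]_r) : Prop :=
  forall i, x ord0 i \is a Num.int.

(* Main.v *)
From HB Require Import structures.
From mathcomp Require Import all_boot all_order all_algebra.
From mathcomp Require Import all_classical all_reals all_analysis.
From mathcomp Require Import zify ring lra.
Set Implicit Arguments. Unset Strict Implicit. Unset Printing Implicit Defensive.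
Import Order.TTheory GRing.Theory Num.Theory.
Import numFieldNormedType.Exports.
Local Open Scope classical_set_scope.
Local Open Scope ring_scope.
Require Import Defs.
Lemma le_sum_norm (R : realType) (T : finType) (F : T -> R) t :
  F t <= \sum_t' `|F t'|.
Proof. by rewrite (bigD1 t) //= (le_trans (ler_norm _)) // ler_wpDr // sumr_ge0. Qed.

Lemma int_step (d : int) : `|d| <= 1 ->
  (absz (d + 1)%R < 3)%N /\ (absz (d + 1))%:Z - 1 = d.
Proof. rewrite ler_norml => /andP[H1 H2]; split; lia. Qed.

Lemma zcombD (P : zmodType) (r : nat) (a b : 'I_r -> int) (L : 'I_r -> P) :
  zcomb (fun i => a i + b i) L = zcomb a L + zcomb b L.
Proof. by rewrite /zcomb -big_split /=; apply: eq_bigr => i _; rewrite mulrzDr. Qed.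

Lemma step_bound (R : realType) (P : zmodType) (s : R) (h : P -> R) (r : nat)
  (L : 'I_r -> P) : growth_hyp s h ->
  exists C M : R, 0 <= C /\ forall c c' : 'I_r -> int,
    (forall i, `|c' i - c i| <= 1) -> M <= l1norm R c ->
    `|h (zcomb c' L) - h (zcomb c L)| <= C * (l1norm R c) `^ (s - 1).
Proof.
move=> G.
have H : forall t : {ffun 'I_r -> 'I_3}, exists CM : R * R, forall m,
   CM.2 <= l1norm R m ->
   `|h (zcomb (fun i => (t i)%:Z - 1) L + zcomb m L) - h (zcomb m L)|
     <= CM.1 * l1norm R m `^ (s-1).
  by move=> t; have [_ [C [M HM]]] := G r (zcomb (fun i => (t i)%:Z - 1) L) L;
     exists (C, M).
have [CM HCM] := boolp.choice H.
exists (\sum_t `|(CM t).1|), (\sum_t `|(CM t).2|); split; first exact: sumr_ge0.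
move=> c c' Hc HM.
pose t : {ffun 'I_r -> 'I_3} := [ffun i => inord (absz (c' i - c i + 1)%R)].
have Ht : forall i, (t i)%:Z - 1 = c' i - c i.
  move=> i; have [H1 H2] := int_step (Hc i).
  by rewrite ffunE inordK.
have Hz : zcomb c' L = zcomb (fun i => (t i)%:Z - 1) L + zcomb c L.
  rewrite -zcombD; congr zcomb; apply: boolp.funext => i.
  by rewrite Ht subrK.
rewrite Hz; apply: le_trans (HCM t c _) _.
  exact: le_trans (le_sum_norm (fun t => (CM t).2) t) HM.
by apply: ler_wpM2r; [exact: powR_ge0 | exact: (le_sum_norm (fun t => (CM t).1) t)].
Qed.
Lemma tele (R : realType) (a : nat -> R) (n : nat) (B : R) :
  (forall j, (j < n)%N -> `|a j.+1 - a j| <= B) -> `|a n - a 0%N| <= n%:R * B.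
Proof.
elim: n => [|n IH] H; first by rewrite subrr normr0 mul0r.
have -> : a n.+1 - a 0%N = (a n.+1 - a n) + (a n - a 0%N) by rewrite addrA subrK.
apply: le_trans (ler_normD _ _) _.
have -> : (n.+1)%:R = n%:R + 1 :> R by rewrite -addn1 natrD.
rewrite mulrDl mul1r [X in _ <= X]addrC; apply: lerD; first exact: (H n (ltnSn n)).
by apply: IH => j jn; apply: H; rewrite ltnS ltnW.
Qed.

Lemma floor_diff (R : realType) (a b : R) : `|a - b| <= 1 ->
  `|Num.floor a - Num.floor b| <= 1.
Proof.
move=> Hab; have := floor_itv a; have := floor_itv b.
move=> /andP[b1 b2] /andP[a1 a2].
move: Hab; rewrite ler_norml => /andP[h1 h2].
have u : (Num.floor a - Num.floor b)%:~R < (2%:~R : R).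
  rewrite intrB; move: a1 b2; rewrite !intrD /=; lra.
have l : ((-2)%:~R : R) < (Num.floor a - Num.floor b)%:~R.
  rewrite intrB; move: a2 b1; rewrite !intrD /=; lra.
rewrite ltr_int in u; rewrite ltr_int in l.
rewrite ler_norml; apply/andP; split; lia.
Qed.

Lemma l1_lower (R : realType) r (z : 'I_r -> R) i0 :
  `|z i0| - 1 <= l1norm R (fun i => Num.floor (z i)).
Proof.
rewrite /l1norm (bigD1 i0) //=.
apply: (@le_trans _ _ (`|Num.floor (z i0)|%:~R)); last first.
  rewrite ler_wpDr //; apply: sumr_ge0 => i _; by rewrite intr_norm.
rewrite intr_norm lerBlDr.
have /andP[f1 f2] := floor_itv (z i0).
have H := ler_normD (Num.floor (z i0))%:~R (z i0 - (Num.floor (z i0))%:~R).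
rewrite [_ + (z i0 - _)]addrC subrK in H.
apply: le_trans H _; rewrite lerD2l ger0_norm ?subr_ge0 //.
rewrite intrD in f2; lra.
Qed.

Lemma l1_upper (R : realType) r (z : 'I_r -> R) :
  l1norm R (fun i => Num.floor (z i)) <= \sum_i (`|z i| + 1).
Proof.
rewrite /l1norm; apply: ler_sum => i _; rewrite intr_norm.
have /andP[f1 f2] := floor_itv (z i).
have H := ler_normD (z i) ((Num.floor (z i))%:~R - z i).
rewrite [z i + _]addrC subrK in H.
apply: le_trans H _; rewrite lerD2l ler0_norm ?subr_le0 //.
rewrite intrD in f2; lra.
Qed.

Lemma pow_between (R : realType) (a t b p : R) : 0 < a -> a <= t -> t <= b ->
  t `^ p <= a `^ p + b `^ p.
Proof.
move=> a0 hat tb; have t0 : 0 < t by apply: lt_le_trans hat.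
have [p0|p0] := leP 0 p.
  apply: (@le_trans _ _ (b `^ p)); last by rewrite lerDr powR_ge0.
  by apply: ge0_ler_powR => //; rewrite nnegrE ltW // (lt_le_trans t0).
apply: (@le_trans _ _ (a `^ p)); last by rewrite lerDl powR_ge0.
have -> : p = - (- p) by rewrite opprK.
rewrite (powRN t (-p)) (powRN a (-p)) lef_pV2 ?posrE ?powR_gt0 //.
by apply: ge0_ler_powR; rewrite ?nnegrE; lra.
Qed.
Lemma conv_close (R : realType) (t eu ev D : R) : 0 <= t <= 1 ->
  `|eu| <= D -> `|ev| <= D -> `|(1 - t) * eu + t * ev| <= D.
Proof.
move=> /andP[t0 t1] hu hv; apply: le_trans (ler_normD _ _) _.
rewrite !normrM (ger0_norm t0) ger0_norm ?subr_ge0 //.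
have := normr_ge0 eu; have := normr_ge0 ev; nra.
Qed.

Lemma lipD (R : realType) (P : zmodType) (s : R) (h : P -> R) (r : nat)
  (L : 'I_r -> P) : growth_hyp s h ->
  forall (x0 : 'I_r -> R) (i0 : 'I_r), x0 i0 != 0 ->
  exists K N0 : R, 0 <= K /\ forall N : R, N0 <= N -> forall u v : 'I_r -> R,
   (forall i, `|u i - N * x0 i| <= `|x0 i0| / 2 * N) ->
   (forall i, `|v i - N * x0 i| <= `|x0 i0| / 2 * N) ->
   forall d : R, 0 <= d -> (forall i, `|u i - v i| <= d) ->
   `|h (zcomb (fun i => Num.floor (u i)) L) - h (zcomb (fun i => Num.floor (v i)) L)|
     <= K * N `^ (s - 1) * (d + 1).
Proof.
move=> G x0 i0 xi0.
have [C [M [C0 HCM]]] := step_bound L G.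
set a0 := `|x0 i0|.
have a00 : 0 < a0 by rewrite normr_gt0.
set al := a0 / 4.
have al0 : 0 < al by rewrite divr_gt0.
set be := \sum_i (`|x0 i| + a0 / 2 + 1).
have be0 : 0 <= be.
  by apply: sumr_ge0 => i _; apply: addr_ge0 => //; apply: addr_ge0 => //; rewrite divr_ge0 // ltW.
exists (C * (al `^ (s - 1) + be `^ (s - 1))), (1 + 4 / a0 + `|M| / al); split.
  by rewrite mulr_ge0 // addr_ge0 // powR_ge0.
move=> N HN u v Hu Hv d d0 Hd.
have N1 : 1 <= N.
  apply: le_trans HN; rewrite -addrA lerDl addr_ge0 // divr_ge0 // ltW //.
have N0 : 0 < N by apply: lt_le_trans N1.
have N4 : 4 / a0 <= N.
  apply: le_trans HN; rewrite -addrA addrCA lerDl addr_ge0 // divr_ge0 // ltW //.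
have NM : M <= al * N.
  have : `|M| / al <= N.
    by apply: le_trans HN; rewrite lerDr addr_ge0 // divr_ge0 // ltW.
  rewrite ler_pdivrMr // mulrC => H; exact: le_trans (ler_norm M) H.
set n := (`|Num.floor d|%N).+1.
have n0 : (0 < n)%N by [].
have nR0 : 0 < n%:R :> R by rewrite ltr0n.
have dn : d < n%:R /\ n%:R <= d + 1.
  have /andP[f1 f2] := floor_itv d.
  have fd0 : 0 <= Num.floor d by rewrite floor_ge0.
  have -> : n%:R = (Num.floor d)%:~R + 1 :> R.
    by rewrite /n -addn1 natrD natr_absz ger0_norm.
  by rewrite intrD in f2; split; lra.
set z := fun (j : nat) (i : 'I_r) => u i + (j%:R / n%:R) * (v i - u i).
set a := fun j => h (zcomb (fun i => Num.floor (z j i)) L).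
have Ha0 : a 0%N = h (zcomb (fun i => Num.floor (u i)) L).
  by rewrite /a /z; congr (h (zcomb _ L)); apply: boolp.funext => i /=; rewrite mul0r mul0r addr0.
have Han : a n = h (zcomb (fun i => Num.floor (v i)) L).
  rewrite /a /z; congr (h (zcomb _ L)); apply: boolp.funext => i /=.
  by rewrite divff ?gt_eqF // mul1r addrC subrK.
rewrite -Ha0 -Han distrC.
set B := C * (al `^ (s - 1) + be `^ (s - 1)) * N `^ (s - 1).
have B0 : 0 <= B by rewrite !mulr_ge0 // ?addr_ge0 // powR_ge0.
apply: (@le_trans _ _ (n%:R * B)); last first.
  by rewrite [_ * (d + 1)]mulrC ler_wpM2r //; case: dn.
apply: tele => j jn.
have tj : 0 <= (j%:R / n%:R : R) <= 1.
  rewrite divr_ge0 ?ler0n //= ler_pdivrMr // mul1r ler_nat; exact: ltnW.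
have Hz : forall j, (j <= n)%N -> forall i, `|z j i - N * x0 i| <= a0 / 2 * N.
  move=> k kn i.
  have tk : 0 <= (k%:R / n%:R : R) <= 1.
    by rewrite divr_ge0 ?ler0n //= ler_pdivrMr // mul1r ler_nat.
  have -> : z k i - N * x0 i = (1 - k%:R / n%:R) * (u i - N * x0 i)
            + (k%:R / n%:R) * (v i - N * x0 i) by rewrite /z; ring.
  exact: conv_close.
have Hzj := Hz j (ltnW jn); have Hzj1 := Hz j.+1 jn.
set c := fun i => Num.floor (z j i).
set c' := fun i => Num.floor (z j.+1 i).
have Hcc : forall i, `|c' i - c i| <= 1.
  move=> i; apply: floor_diff.
  have -> : z j.+1 i - z j i = (v i - u i) / n%:R.
    rewrite /z -addn1 natrD; field; by rewrite gt_eqF.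
  rewrite normrM normfV (ger0_norm (ltW nR0)) ler_pdivrMr // mul1r distrC.
  apply: le_trans (Hd i) _; case: dn => /ltW //.
have Hl : al * N <= l1norm R c.
  apply: le_trans (l1_lower (z j) i0).
  have h1 := lerB_dist (N * x0 i0) (z j i0).
  have h2 := Hzj i0.
  rewrite distrC normrM (ger0_norm (ltW N0)) -/a0 in h1.
  have h3 : 4 <= a0 * N by move: N4; rewrite ler_pdivrMr // mulrC.
  rewrite /al; lra.
have Hu' : l1norm R c <= be * N.
  apply: le_trans (l1_upper (z j)) _.
  rewrite /be mulr_suml; apply: ler_sum => i _.
  have h1 := lerB_dist (z j i) (N * x0 i).
  have h2 := Hzj i.
  rewrite normrM (ger0_norm (ltW N0)) in h1.
  have h4 := normr_ge0 (x0 i).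
  nra.
rewrite /a -/c -/c'.
apply: le_trans (HCM c c' Hcc (le_trans NM Hl)) _.
rewrite /B -mulrA; apply: (ler_wpM2l C0).
apply: le_trans (pow_between (s - 1) _ Hl Hu') _; first by rewrite mulr_gt0.
by rewrite (powRM _ (ltW al0) (ltW N0)) (powRM _ be0 (ltW N0)) mulrDl.
Qed.
Lemma limsup_char (R : realType) (u : nat -> R) (l : R) :
  limn_esup (fun m => (u m)%:E) = l%:E <->
  (forall e, 0 < e -> (exists n, forall m, (n <= m)%N -> u m <= l + e) /\
     (forall n, exists m, (n <= m)%N /\ l - e <= u m)).
Proof.
rewrite limn_esup_lim.
have -> : limn (esups (fun m => (u m)%:E)) =
   ereal_inf (range (esups (fun m => (u m)%:E))).
  by apply/cvg_lim => //; exact: cvg_esups_inf.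
split.
- move=> Hinf e e0; split.
  + have : (ereal_inf (range (esups (fun m => (u m)%:E))) < (l + e)%:E)%E.
      by rewrite Hinf lte_fin ltrDl.
    move=> /ereal_inf_lt[_ [n _ <-]] Hn; exists n => m nm.
    rewrite -lee_fin; apply: le_trans (ltW Hn).
    by apply: ereal_sup_ubound; exists m.
  + move=> n.
    have : ((l - e)%:E < esups (fun m => (u m)%:E) n)%E.
      apply: (@lt_le_trans _ _ l%:E); first by rewrite lte_fin ltrBlDr ltrDl.
      by rewrite -Hinf; apply: ereal_inf_lbound; exists n.
    move=> /ereal_sup_gt[_ [m /= nm <-]] Hm; exists m; split => //.
    by rewrite -lee_fin ltW.
- move=> H; apply/eqP; rewrite eq_le; apply/andP; split.
  + apply/lee_addgt0Pr => e e0.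
    have [[n Hn] _] := H e e0.
    apply: (@le_trans _ _ (esups (fun m => (u m)%:E) n)).
      by apply: ereal_inf_lbound; exists n.
    by apply: ge_ereal_sup => _ [m /= nm <-]; rewrite -EFinD lee_fin Hn.
  + apply: le_ereal_inf_tmp => _ [n _ <-].
    apply/lee_subgt0Pr => e e0.
    have [_ Hf] := H e e0; have [m [nm Hm]] := Hf n.
    apply: (@le_trans _ _ (u m)%:E); first by rewrite -EFinB lee_fin.
    by apply: ereal_sup_ubound; exists m.
Qed.
Definition cvec (R : realType) (r : nat) (c : 'I_r -> int) : 'rV[R]_r :=
  \row_i (c i)%:~R.

Lemma hhat_cvec (R : realType) (P : zmodType) (V : lmodType R)
  (iota : {additive P -> V}) (hh : V -> R) (r : nat) (L : 'I_r -> P)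
  (c : 'I_r -> int) :
  hhat_r iota hh L (cvec R c) = hh (iota (zcomb c L)).
Proof.
rewrite /hhat_r /zcomb raddf_sum; congr hh; apply: eq_bigr => i _.
by rewrite mxE raddfMz scaler_int.
Qed.

Lemma hhat_hom (R : realType) (P : zmodType) (V : lmodType R)
  (iota : {additive P -> V}) (hh : V -> R) (r : nat) (L : 'I_r -> P) (s : R) :
  (forall (t : R) (v : V), 0 <= t -> hh (t *: v) = t `^ s * hh v) ->
  forall (t : R) x, 0 <= t -> hhat_r iota hh L (t *: x) = t `^ s * hhat_r iota hh L x.
Proof.
move=> Hh t x t0; rewrite /hhat_r -Hh // scaler_sumr; congr hh.
by apply: eq_bigr => i _; rewrite mxE scalerA.
Qed.

Lemma fseq_cvec (R : realType) (P : zmodType) (s : R) (h : P -> R) (r : nat)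
  (L : 'I_r -> P) (c : 'I_r -> int) (k : nat) :
  fseq s h L k (cvec R c) = ((k%:R) `^ s)^-1 * h (zcomb c L *+ k).
Proof.
rewrite /fseq /zcomb -sumrMnl; congr (_ * h _); apply: eq_bigr => i _.
have -> : k%:R * (cvec R c) ord0 i = (c i * k%:Z)%:~R.
  by rewrite mxE intrM mulrC.
by rewrite intrKfloor mulrzA -pmulrn.
Qed.

Lemma norm_le_l1 (R : realType) (r : nat) (c : 'I_r -> int) i :
  `|(c i)%:~R| <= l1norm R c.
Proof.
rewrite /l1norm (bigD1 i) //= -intr_norm lerDl.
by apply: sumr_ge0 => j _; rewrite intr_norm.
Qed.

Lemma l1_ge0 (R : realType) (r : nat) (c : 'I_r -> int) : 0 <= l1norm R c.
Proof. by apply: sumr_ge0 => j _; rewrite intr_norm. Qed.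

Lemma big_nat (R : realType) (X : R) : exists m1 : nat, forall m : nat,
  (m1 <= m)%N -> X < m%:R.
Proof.
exists (`|Num.floor `|X| |%N.+1) => m Hm.
have /andP[_ f2] := floor_itv `|X|.
have f0 : 0 <= Num.floor `|X| by rewrite floor_ge0.
apply: (@le_lt_trans _ _ `|X|); first exact: ler_norm.
have E : (Num.floor `|X|)%:~R = (`|Num.floor `|X| |%N)%:R :> R.
  by rewrite natr_absz (ger0_norm f0).
apply: (lt_le_trans f2); rewrite intrD E.
move: Hm; rewrite -(ler_nat R) => H'; apply: le_trans H'.
by rewrite -addn1 natrD.
Qed.

Lemma apx (R : realType) (P : zmodType) (s : R) (h : P -> R) (r : nat)
  (L : 'I_r -> P) : 0 < s -> growth_hyp s h ->
  forall (x : 'rV[R]_r) (i0 : 'I_r), x ord0 i0 != 0 ->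
  exists K de : R, 0 <= K /\ 0 < de /\
  forall (q : nat) (c : 'I_r -> int) (e0 : R), (0 < q)%N -> 0 <= e0 <= de ->
   (forall i, `|x ord0 i - (c i)%:~R / q%:R| <= e0) ->
   forall eta, 0 < eta -> exists m1 : nat, forall m k : nat,
     (m1 <= m)%N -> (0 < k)%N -> `|m%:R - q%:R * k%:R : R| <= q%:R ->
     `|fseq s h L m x - (k%:R `^ s / m%:R `^ s) * fseq s h L k (cvec R c)|
       <= K * e0 + eta.
Proof.
move=> s0 G x i0 xi0.
have [K [N0 [K0 HD]]] := lipD L G xi0.
set a0 := `|x ord0 i0|.
have a00 : 0 < a0 by rewrite normr_gt0.
exists K, (a0 / 4); split => //; split; first by rewrite divr_gt0.
move=> q c e0 q0 /andP[e00 e0d] Hc eta eta0.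
set Bc := l1norm R c.
have Bc0 : 0 <= Bc := l1_ge0 R c.
have [m1 Hm1] := big_nat (`|N0| + 1 + 4 * Bc / a0 + K * (Bc + 1) / eta).
exists m1 => m k Hm k0 Hqk.
have HmX := Hm1 m Hm.
have qR0 : 0 < q%:R :> R by rewrite ltr0n.
have T10 : 0 <= 4 * Bc / a0 by rewrite divr_ge0 ?mulr_ge0 // ltW.
have T20 : 0 <= K * (Bc + 1) / eta by rewrite divr_ge0 ?mulr_ge0 ?addr_ge0 // ltW.
have hN := ler_norm N0.
have hN' := normr_ge0 N0.
have mN0 : N0 <= m%:R by lra.
have m1R : 1 <= m%:R :> R by lra.
have mR0 : 0 < m%:R :> R by lra.
have mBc : 4 * Bc / a0 <= m%:R by lra.
have mK : K * (Bc + 1) / eta <= m%:R by lra.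
pose u := fun i => m%:R * x ord0 i.
pose v := fun i => k%:R * (c i)%:~R : R.
pose d := m%:R * e0 + Bc.
have Huv : forall i, `|v i - m%:R * x ord0 i| <= d.
  move=> i.
  have -> : v i - m%:R * x ord0 i =
     ((q%:R * k%:R - m%:R) / q%:R) * (c i)%:~R
     + m%:R * ((c i)%:~R / q%:R - x ord0 i).
    by rewrite /v; field; rewrite gt_eqF.
  apply: le_trans (ler_normD _ _) _; rewrite /d [X in _ <= X]addrC; apply: lerD.
    rewrite normrM; apply: le_trans (norm_le_l1 R c i).
    rewrite ler_piMl // normrM normfV (ger0_norm (ltW qR0)) ler_pdivrMr // mul1r.
    by rewrite distrC.
  by rewrite normrM (ger0_norm (ltW mR0)) ler_pM2l // distrC.
have da : d <= a0 / 2 * m%:R.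
  rewrite /d.
  have h1 : Bc <= a0 / 4 * m%:R.
    by move: mBc; rewrite ler_pdivrMr // => H; rewrite mulrAC ler_pdivlMr //; lra.
  have h2 : m%:R * e0 <= m%:R * (a0 / 4) by rewrite ler_wpM2l // ltW.
  lra.
have d0 : 0 <= d by rewrite /d addr_ge0 // mulr_ge0 // ltW.
have Hmain : `|h (zcomb (fun i => Num.floor (u i)) L) -
      h (zcomb (fun i => Num.floor (v i)) L)| <= K * m%:R `^ (s - 1) * (d + 1).
  apply: HD => //.
  - by move=> i; rewrite /u subrr normr0 mulr_ge0 // ?divr_ge0 // ltW.
  - by move=> i; apply: le_trans (Huv i) da.
  - by move=> i; rewrite distrC; exact: Huv.
have Ef : fseq s h L k (cvec R c) =
    (k%:R `^ s)^-1 * h (zcomb (fun i => Num.floor (v i)) L).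
  by rewrite /fseq /zcomb; congr (_ * h _); apply: eq_bigr => i _; rewrite mxE.
have Em : fseq s h L m x =
    (m%:R `^ s)^-1 * h (zcomb (fun i => Num.floor (u i)) L) by [].
have kR0 : 0 < k%:R :> R by rewrite ltr0n.
have ks0 : 0 < k%:R `^ s := powR_gt0 s kR0.
have ms0 : 0 < m%:R `^ s := powR_gt0 s mR0.
rewrite Ef Em.
set Hu := h (zcomb (fun i => Num.floor (u i)) L).
set Hv := h (zcomb (fun i => Num.floor (v i)) L).
have -> : (m%:R `^ s)^-1 * Hu - k%:R `^ s / m%:R `^ s * ((k%:R `^ s)^-1 * Hv)
   = (m%:R `^ s)^-1 * (Hu - Hv).
  by field; rewrite !gt_eqF.
have msi : 0 <= (m%:R `^ s)^-1 by rewrite invr_ge0 ltW.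
rewrite normrM (ger0_norm msi).
apply: le_trans (ler_wpM2l msi Hmain) _.
have Ep : m%:R `^ (s - 1) = m%:R `^ s / m%:R.
  by rewrite powRB ?(gt_eqF mR0) ?implybT // powRr1 // ltW.
rewrite Ep.
have -> : (m%:R `^ s)^-1 * (K * (m%:R `^ s / m%:R) * (d + 1)) =
   K * e0 + K * (Bc + 1) / m%:R.
  by rewrite /d; field; rewrite !gt_eqF.
rewrite lerD2l ler_pdivrMr //.
by move: mK; rewrite ler_pdivrMr // [eta * _]mulrC.
Qed.
Lemma eps_cvg (R : realType) (u : nat -> R) (l : R) :
  (forall e, 0 < e -> exists n, forall m, (n <= m)%N -> `|u m - l| <= e) ->
  u m @[m --> \oo] --> l.
Proof.
move=> H; apply/cvgrPdist_le => e e0.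
have [n Hn] := H e e0; exists n => // m /= nm; rewrite distrC; exact: Hn.
Qed.

Lemma cvg_eps (R : realType) (u : nat -> R) (l : R) :
  u m @[m --> \oo] --> l ->
  (forall e, 0 < e -> exists n, forall m, (n <= m)%N -> `|u m - l| <= e).
Proof.
move=> /cvgrPdist_le H e e0.
have [n _ Hn] := H e e0; exists n => m nm; rewrite distrC; exact: Hn.
Qed.

Lemma cont_eps (R : realType) (r : nat) (f : 'rV[R]_r -> R) (x : 'rV[R]_r) :
  continuous f -> forall e, 0 < e -> exists2 eta, 0 < eta &
    forall z : 'rV[R]_r, (forall i, `|x ord0 i - z ord0 i| < eta) -> `|f x - f z| < e.
Proof.
move=> Hc e e0.
have /cvg_ballP /(_ e e0) := Hc x.
move=> /nbhs_ballP [eta eta0 Heta]; exists eta => // z Hz.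
have : ball x eta z.
  split => // i j; rewrite (ord1 i); exact: Hz.
move=> /Heta; rewrite /ball /=. done.
Qed.

Lemma closure_eps (R : realType) (r : nat) (S : set 'rV[R]_r) (x : 'rV[R]_r) :
  closure S x -> forall eta, 0 < eta -> exists x', S x' /\
     forall i, `|x ord0 i - x' ord0 i| < eta.
Proof.
move=> Hx eta eta0.
have [x' [Sx' Bx']] := Hx _ (nbhsx_ballx x eta eta0).
exists x'; split => // i; case: Bx' => _ /(_ ord0 i); done.
Qed.

Lemma open_eps (R : realType) (r : nat) (S : set 'rV[R]_r) (x : 'rV[R]_r) :
  open S -> S x -> exists2 rho, 0 < rho &
   forall z : 'rV[R]_r, (forall i, `|x ord0 i - z ord0 i| < rho) -> S z.
Proof.
move=> HS Sx.
have := HS x Sx.  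
move=> /nbhs_ballP [rho rho0 H]; exists rho => // z Hz.
apply: H; split => // i j; rewrite (ord1 i); exact: Hz.
Qed.

Lemma invpow (R : realType) (q s : R) : 0 < q -> (q^-1) `^ s = (q `^ s)^-1.
Proof.
move=> q0; apply: (@mulIf _ (q `^ s)); first by rewrite gt_eqF // powR_gt0.
rewrite mulVf ?gt_eqF ?powR_gt0 // -powRM ?invr_ge0 ?ltW //.
by rewrite mulVf ?gt_eqF // powR1.
Qed.

Lemma weight_le (R : realType) (s : R) (q k m : nat) : 0 < s -> (0 < q)%N ->
  (0 < m)%N -> (q * k <= m)%N -> k%:R `^ s / m%:R `^ s <= (q%:R `^ s)^-1 :> R.
Proof.
move=> s0 q0 m0 qkm.
have ms0 : 0 < m%:R `^ s :> R by rewrite powR_gt0 // ltr0n.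
have qs0 : 0 < q%:R `^ s :> R by rewrite powR_gt0 // ltr0n.
have H : k%:R `^ s * q%:R `^ s <= m%:R `^ s :> R.
  rewrite -powRM ?ler0n //; apply: ge0_ler_powR; rewrite ?nnegrE ?ler0n ?(ltW s0) //.
  by rewrite -natrM ler_nat mulnC.
rewrite ler_pdivrMr // mulrC -(mulfK (lt0r_neq0 qs0) (k%:R `^ s)) ler_pM2r ?invr_gt0 //.
Qed.

Lemma weight_ge (R : realType) (s : R) (q k m : nat) : 0 < s -> (0 < q)%N ->
  (0 < m)%N -> (m <= q * k)%N -> (q%:R `^ s)^-1 <= k%:R `^ s / m%:R `^ s :> R.
Proof.
move=> s0 q0 m0 qkm.
have ms0 : 0 < m%:R `^ s :> R by rewrite powR_gt0 // ltr0n.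
have qs0 : 0 < q%:R `^ s :> R by rewrite powR_gt0 // ltr0n.
have H : m%:R `^ s <= k%:R `^ s * q%:R `^ s :> R.
  rewrite -powRM ?ler0n //; apply: ge0_ler_powR; rewrite ?nnegrE ?ler0n ?(ltW s0) //.
  by rewrite -natrM ler_nat mulnC.
rewrite ler_pdivlMr // mulrC -(mulfK (lt0r_neq0 qs0) (k%:R `^ s)) ler_pM2r ?invr_gt0 //.
Qed.

Lemma pick_k (R : realType) (s : R) (q m : nat) (V : R) (up : bool) :
  0 < s -> (0 < q)%N -> (q <= m)%N -> exists k : nat,
  [/\ (0 < k)%N, (m %/ q <= k)%N, `|m%:R - q%:R * k%:R : R| <= q%:R &
   (if up then k%:R `^ s / m%:R `^ s * V <= (q%:R `^ s)^-1 * V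
    else (q%:R `^ s)^-1 * V <= k%:R `^ s / m%:R `^ s * V)].
Proof.
move=> s0 q0 qm.
have m0 : (0 < m)%N by apply: leq_trans qm.
have k00 : (0 < m %/ q)%N by rewrite divn_gt0.
have h0 : (q * (m %/ q) <= m)%N by rewrite mulnC leq_divM.
have h1 : (m <= q * (m %/ q).+1)%N.
  by rewrite mulnC; apply: ltnW; rewrite ltn_ceil.
have d0 : `|m%:R - q%:R * (m %/ q)%:R : R| <= q%:R.
  rewrite -natrM ger0_norm ?subr_ge0 ?ler_nat // lerBlDr -natrD ler_nat.
  by apply: (leq_trans h1); rewrite mulnS addnC.
have d1 : `|m%:R - q%:R * (m %/ q).+1%:R : R| <= q%:R.
  rewrite -natrM ler0_norm ?subr_le0 ?ler_nat // opprB lerBlDr -natrD ler_nat.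
  by rewrite mulnS leq_add2l.
have w0 := weight_le s0 q0 m0 h0.
have w1 := weight_ge s0 q0 m0 h1.
have [V0|V0] := leP 0 V; case: up.
- exists (m %/ q)%N; split => //; exact: ler_wpM2r.
- exists (m %/ q)%N.+1; split => //; exact: ler_wpM2r.
- exists (m %/ q)%N.+1; split => //; apply: ler_wnM2r => //; exact: ltW.
- exists (m %/ q)%N; split => //; apply: ler_wnM2r => //; exact: ltW.
Qed.

Lemma pow_inv_small (R : realType) (s a : R) : 0 < s -> forall e, 0 < e ->
  exists n, forall m : nat, (n <= m)%N -> `|(m%:R `^ s)^-1 * a| <= e.
Proof.
move=> s0 e e0.
set X := (`|a| + 1) / e.
have X0 : 0 < X by rewrite divr_gt0 // ltr_wpDl.
have [n Hn] := big_nat (X `^ (s^-1)).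
exists n => m nm; have Hm := Hn m nm.
have mR0 : 0 < m%:R :> R by apply: le_lt_trans Hm; exact: powR_ge0.
have ms0 : 0 < m%:R `^ s :> R by rewrite powR_gt0.
have HX : X <= m%:R `^ s.
  have -> : X = (X `^ (s^-1)) `^ s by rewrite -powRrM mulVf ?gt_eqF // powRr1 // ltW.
  by apply: ge0_ler_powR; rewrite ?nnegrE ?powR_ge0 ?(ltW s0) ?(ltW mR0) // ltW.
rewrite normrM ger0_norm ?invr_ge0 ?(ltW ms0) // mulrC ler_pdivrMr //.
move: HX; rewrite /X ler_pdivrMr // => HX.
have : `|a| + 1 <= m%:R `^ s * e by [].
rewrite mulrC; lra.
Qed.
Lemma upper_part (R : realType) (P : zmodType) (s : R) (h : P -> R) (r : nat)
  (L : 'I_r -> P) (x : 'rV[R]_r) (K : R) (q : nat) (c : 'I_r -> int) (e0 : R) :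
  (forall eta, 0 < eta -> exists m1 : nat, forall m k : nat,
     (m1 <= m)%N -> (0 < k)%N -> `|m%:R - q%:R * k%:R : R| <= q%:R ->
     `|fseq s h L m x - (k%:R `^ s / m%:R `^ s) * fseq s h L k (cvec R c)|
       <= K * e0 + eta) ->
  0 < s -> (0 < q)%N -> forall (lb : R) (nb : nat),
  (forall k, (nb <= k)%N -> fseq s h L k (cvec R c) <= lb) ->
  forall eta, 0 < eta -> exists m0, forall m, (m0 <= m)%N ->
    fseq s h L m x <= (q%:R `^ s)^-1 * lb + K * e0 + eta.
Proof.
move=> HA s0 q0 lb nb Hb eta eta0.
have [m1 Hm1] := HA eta eta0.
exists (m1 + q * nb + q)%N => m Hm.
have qm : (q <= m)%N by apply: leq_trans Hm; rewrite leq_addl.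
have [k [k0 kq dk wk]] := pick_k lb true s0 q0 qm.
have nbk : (nb <= k)%N.
  apply: leq_trans kq; rewrite leq_divRL // mulnC; apply: leq_trans Hm.
  by rewrite -addnA addnCA leq_addr.
have H := Hm1 m k (leq_trans (leq_trans (leq_addr _ _) (leq_addr _ _)) Hm) k0 dk.
have w0 : 0 <= k%:R `^ s / m%:R `^ s :> R by rewrite divr_ge0 ?powR_ge0.
have H2 : k%:R `^ s / m%:R `^ s * fseq s h L k (cvec R c) <=
          k%:R `^ s / m%:R `^ s * lb by apply: ler_wpM2l => //; exact: Hb.
move: H; rewrite ler_norml => /andP[_ H]; simpl in wk; lra.
Qed.

Lemma lower_part (R : realType) (P : zmodType) (s : R) (h : P -> R) (r : nat)
  (L : 'I_r -> P) (x : 'rV[R]_r) (K : R) (q : nat) (c : 'I_r -> int) (e0 : R) :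
  (forall eta, 0 < eta -> exists m1 : nat, forall m k : nat,
     (m1 <= m)%N -> (0 < k)%N -> `|m%:R - q%:R * k%:R : R| <= q%:R ->
     `|fseq s h L m x - (k%:R `^ s / m%:R `^ s) * fseq s h L k (cvec R c)|
       <= K * e0 + eta) ->
  0 < s -> (0 < q)%N -> forall (lb : R) (nb : nat),
  (forall k, (nb <= k)%N -> lb <= fseq s h L k (cvec R c)) ->
  forall eta, 0 < eta -> exists m0, forall m, (m0 <= m)%N ->
    (q%:R `^ s)^-1 * lb - K * e0 - eta <= fseq s h L m x.
Proof.
move=> HA s0 q0 lb nb Hb eta eta0.
have [m1 Hm1] := HA eta eta0.
exists (m1 + q * nb + q)%N => m Hm.
have qm : (q <= m)%N by apply: leq_trans Hm; rewrite leq_addl.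
have [k [k0 kq dk wk]] := pick_k lb false s0 q0 qm.
have nbk : (nb <= k)%N.
  apply: leq_trans kq; rewrite leq_divRL // mulnC; apply: leq_trans Hm.
  by rewrite -addnA addnCA leq_addr.
have H := Hm1 m k (leq_trans (leq_trans (leq_addr _ _) (leq_addr _ _)) Hm) k0 dk.
have w0 : 0 <= k%:R `^ s / m%:R `^ s :> R by rewrite divr_ge0 ?powR_ge0.
have H2 : k%:R `^ s / m%:R `^ s * lb <=
          k%:R `^ s / m%:R `^ s * fseq s h L k (cvec R c) by apply: ler_wpM2l => //; exact: Hb.
move: H; rewrite ler_norml => /andP[H _]; simpl in wk; lra.
Qed.

Lemma div_swap (R : realType) (A e q : R) : 0 < e -> 0 < q ->
  A / e < q -> A / q < e.
Proof. by move=> e0 q0; rewrite !ltr_pdivrMr // mulrC. Qed.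

Lemma floor_approx (R : realType) (q a : R) : 0 < q ->
  `|a - (Num.floor (q * a))%:~R / q| <= 1 / q.
Proof.
move=> q0; have /andP[f1 f2] := floor_itv (q * a).
have -> : a - (Num.floor (q * a))%:~R / q = (q * a - (Num.floor (q * a))%:~R) / q.
  by field; rewrite gt_eqF.
rewrite normrM normfV (gtr0_norm q0) ler_pM2r ?invr_gt0 // ger0_norm ?subr_ge0 //.
by rewrite intrD in f2; lra.
Qed.

Lemma w_exact (R : realType) (s : R) (q k : nat) : (0 < q)%N -> (0 < k)%N ->
  k%:R `^ s / (q * k)%:R `^ s = (q%:R `^ s)^-1 :> R.
Proof.
move=> q0 k0.
have ks : 0 < k%:R `^ s :> R by rewrite powR_gt0 // ltr0n.
have qs : 0 < q%:R `^ s :> R by rewrite powR_gt0 // ltr0n.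
rewrite natrM powRM ?ler0n //; field; by rewrite !gt_eqF.
Qed.

Unset Implicit Arguments.

Theorem propositionA5 (R : realType) (P : zmodType) (s : R) (h : P -> R)
  (V : lmodType R) (iota : {additive P -> V}) (hh : V -> R)
  (r : nat) (L : 'I_r -> P) :
  0 < s ->
  growth_hyp s h ->
  is_tensor_R iota ->
  is_hhat s h iota hh ->
  (forall x : 'rV[R]_r,
      (hhat_r iota hh L x)%:E =
        limn_esup (fun m : nat => (fseq s h L m x)%:E)) /\
  (forall sigma : set 'rV[R]_r,
      open_convex_cone sigma ->
      (forall x, sigma x -> intpoint x ->
         fseq s h L m x @[m --> \oo] --> hhat_r iota hh L x) ->
      forall x, closure sigma x ->
         fseq s h L m x @[m --> \oo] --> hhat_r iota hh L x).
Proof.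
move=> s0 G _ [Hlim Hhom Hcont].
have HhC : continuous (hhat_r iota hh L) := Hcont r (fun i => iota (L i)).
have Hh0 : hhat_r iota hh L 0 = 0.
  have := @hhat_hom R P V iota hh r L s Hhom 0 0 (lexx 0).
  by rewrite scale0r powR0 ?gt_eqF // mul0r.
have Hint : forall c, (hhat_r iota hh L (cvec R c))%:E =
    limn_esup (fun k => (fseq s h L k (cvec R c))%:E).
  move=> c; rewrite hhat_cvec Hlim; congr limn_esup; apply: boolp.funext => k.
  by rewrite fseq_cvec.
have Hsc : forall (q : nat) c, (0 < q)%N ->
    hhat_r iota hh L ((q%:R)^-1 *: cvec R c) =
    (q%:R `^ s)^-1 * hhat_r iota hh L (cvec R c).
  by move=> q c q0; rewrite (@hhat_hom R P V iota hh r L s Hhom) // ?invr_ge0 ?ler0n // invpow // ltr0n.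
have Fzero : forall e, 0 < e -> exists n, forall m, (n <= m)%N ->
    `|fseq s h L m 0 - 0| <= e.
  move=> e e0; have [n Hn] := pow_inv_small (h 0) s0 e0; exists n => m nm.
  rewrite subr0.
  have -> : fseq s h L m 0 = (m%:R `^ s)^-1 * h 0.
    rewrite /fseq; congr (_ * h _); rewrite big1 // => i _.
    by rewrite mxE mulr0 floor0 mulr0z.
  exact: Hn.
have xcase : forall x : 'rV[R]_r, x = 0 \/ exists i0, x ord0 i0 != 0.
  move=> x; case: (pickP (fun i => x ord0 i != 0)) => [i0 Hi0|Hn].
    by right; exists i0.
  left; apply/matrixP => i j; rewrite (ord1 i) mxE.
  by move: (Hn j) => /negbFE /eqP.
split.
- move=> x; case: (xcase x) => [->|[i0 xi0]].
    rewrite Hh0; apply: esym; apply/limsup_char => e e0; have [n Hn] := Fzero e e0; split.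
      exists n => m nm; have := Hn m nm; rewrite subr0 add0r => H.
      exact: le_trans (ler_norm _) H.
    move=> n'; exists (n + n')%N; split; first exact: leq_addl.
    have := Hn (n + n')%N (leq_addr _ _); rewrite subr0 ler_norml sub0r.
    by move=> /andP[H _].
  have [K [de [K0 [de0 HA]]]] := apx L s0 G xi0.
  apply: esym; apply/limsup_char => e e0.
  have e40 : 0 < e / 4 by rewrite divr_gt0.
  have [etac etac0 Hcx] := cont_eps x HhC e40.
  have [q1 Hq1] := big_nat (1 / de + 2 / etac + 4 * K / e).
  set q := q1.+1.
  have q0 : (0 < q)%N by [].
  have qR0 : 0 < q%:R :> R by rewrite ltr0n.
  have Hq := Hq1 q (leqnSn q1).
  have t1 : 0 <= 1 / de by rewrite divr_ge0 // ltW.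
  have t2 : 0 <= 2 / etac by rewrite divr_ge0 // ltW.
  have t3 : 0 <= 4 * K / e by rewrite divr_ge0 ?mulr_ge0 // ltW.
  have qde : 1 / q%:R < de by apply: div_swap => //; lra.
  have qet : 2 / q%:R < etac by apply: div_swap => //; lra.
  have qK : 4 * K / q%:R < e by apply: div_swap => //; lra.
  pose c := fun i => Num.floor (q%:R * x ord0 i).
  have Hc : forall i, `|x ord0 i - (c i)%:~R / q%:R| <= 1 / q%:R.
    by move=> i; apply: floor_approx.
  have e00 : 0 <= (1 / q%:R : R) <= de.
    by apply/andP; split; [rewrite divr_ge0 // ltW | exact: ltW qde].
  have HA' := HA q c (1 / q%:R) q0 e00 Hc.
  pose y := cvec R c.
  pose lb := hhat_r iota hh L y.
  have Hz : `|hhat_r iota hh L x - (q%:R `^ s)^-1 * lb| < e / 4.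
    rewrite /lb -Hsc //; apply: Hcx => i; rewrite !mxE mulrC.
    apply: le_lt_trans (Hc i) _.
    have : 0 < (1 / q%:R : R) by rewrite divr_gt0.
    move=> H1; lra.
  have qs0 : 0 < q%:R `^ s :> R by rewrite powR_gt0.
  set QS := (q%:R `^ s)^-1.
  have QS0 : 0 < QS by rewrite invr_gt0.
  have ep0 : 0 < e / 4 * q%:R `^ s by rewrite mulr_gt0.
  have QSep : QS * (e / 4 * q%:R `^ s) = e / 4.
    by rewrite /QS; field; rewrite gt_eqF.
  have [[nb Hnb] Hfr] := (limsup_char _ _).1 (esym (Hint c)) _ ep0.
  have KQ : K * (1 / q%:R) < e / 4.
    by move: qK; rewrite mulrA -[4 * K / _]mulrA; lra.
  split.
  + have [m0 Hm0] := upper_part HA' s0 q0 Hnb e40.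
    exists m0 => m Hm; have := Hm0 m Hm.
    rewrite mulrDr QSep; move: Hz; rewrite ltr_norml => /andP[z1 z2].
    rewrite -/QS -/lb in z1 z2 *; lra.
  + move=> n.
    have [m1 Hm1] := HA' (e / 4) e40.
    have [k [kn Hk]] := Hfr (n + m1 + 1)%N.
    have k0 : (0 < k)%N by apply: leq_trans kn; rewrite addn1.
    exists (q * k)%N; split.
      apply: leq_trans (leq_trans (leq_addr _ _) (leq_trans (leq_addr _ _) kn)) _.
      by rewrite leq_pmull.
    have Hmk : (m1 <= q * k)%N.
      apply: leq_trans (leq_pmull _ q0).
      by apply: leq_trans kn; rewrite -addnA addnCA leq_addr.
    have Hd : `|(q * k)%N%:R - q%:R * k%:R : R| <= q%:R.
      by rewrite natrM subrr normr0 ler0n.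
    have Hm := Hm1 (q * k)%N k Hmk k0 Hd.
    rewrite w_exact // -/QS in Hm.
    have H2 : QS * (lb - e / 4 * q%:R `^ s) <= QS * fseq s h L k y.
      by apply: ler_wpM2l => //; exact: ltW.
    rewrite mulrBr QSep in H2.
    move: Hm; rewrite ler_norml => /andP[Hm _].
    move: Hz; rewrite ltr_norml => /andP[z1 z2].
    rewrite -/QS -/lb in z1 z2 *; lra.
- move=> sigma [Sopen _ Scone] Hsig x Hx.
  case: (xcase x) => [->|[i0 xi0]].
    by rewrite Hh0; apply: eps_cvg; exact: Fzero.
  have [K [de [K0 [de0 HA]]]] := apx L s0 G xi0.
  apply: eps_cvg => e e0.
  have e40 : 0 < e / 4 by rewrite divr_gt0.
  have [etac etac0 Hcx] := cont_eps x HhC e40.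
  have [n1 Hn1] := big_nat (2 / de + 4 / etac + 8 * K / e).
  set N1 := n1.+1.
  have N1R : 0 < N1%:R :> R by rewrite ltr0n.
  have HN := Hn1 N1 (leqnSn n1).
  have t1 : 0 <= 2 / de by rewrite divr_ge0 // ltW.
  have t2 : 0 <= 4 / etac by rewrite divr_ge0 // ltW.
  have t3 : 0 <= 8 * K / e by rewrite divr_ge0 ?mulr_ge0 // ltW.
  have n1de : 2 / N1%:R < de by apply: div_swap => //; lra.
  have n1et : 4 / N1%:R < etac by apply: div_swap => //; lra.
  have n1K : 8 * K / N1%:R < e by apply: div_swap => //; lra.
  pose eta1 := 1 / N1%:R : R.
  have eta10 : 0 < eta1 by rewrite divr_gt0.
  have [x' [Sx' Hxx']] := closure_eps Hx eta10.
  have [rho rho0 Hrho] := open_eps Sopen Sx'.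
  have [q1 Hq1] := big_nat (1 / eta1 + 1 / rho).
  set q := q1.+1.
  have q0 : (0 < q)%N by [].
  have qR0 : 0 < q%:R :> R by rewrite ltr0n.
  have Hq := Hq1 q (leqnSn q1).
  have u1 : 0 <= 1 / eta1 by rewrite divr_ge0 // ltW.
  have u2 : 0 <= 1 / rho by rewrite divr_ge0 // ltW.
  have qeta : 1 / q%:R < eta1 by apply: div_swap => //; lra.
  have qrho : 1 / q%:R < rho by apply: div_swap => //; lra.
  pose c := fun i => Num.floor (q%:R * x' ord0 i).
  pose ee := eta1 + eta1.
  have Hc : forall i, `|x ord0 i - (c i)%:~R / q%:R| <= ee.
    move=> i; have H1 := floor_approx (x' ord0 i) qR0.
    have H2 := Hxx' i.
    have -> : x ord0 i - (c i)%:~R / q%:R =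
       (x ord0 i - x' ord0 i) + (x' ord0 i - (c i)%:~R / q%:R) by rewrite addrA subrK.
    apply: le_trans (ler_normD _ _) _; rewrite /ee; lra.
  have e00 : 0 <= (ee : R) <= de.
    apply/andP; split; first by rewrite /ee addr_ge0 // ltW.
    by rewrite /ee /eta1; lra.
  have HA' := HA q c ee q0 e00 Hc.
  pose y := cvec R c.
  pose z := (q%:R)^-1 *: y.
  have Sz : sigma z.
    apply: Hrho => i; rewrite !mxE mulrC.
    apply: le_lt_trans (floor_approx (x' ord0 i) qR0) _; exact: qrho.
  have Sy : sigma y.
    have -> : y = q%:R *: z by rewrite /z scalerA mulfV ?gt_eqF // scale1r.
    by apply: Scone.
  have Iy : intpoint y by move=> i; rewrite mxE intr_int.
  have Hy := cvg_eps (Hsig y Sy Iy).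
  pose lb := hhat_r iota hh L y.
  have Hz : `|hhat_r iota hh L x - (q%:R `^ s)^-1 * lb| < e / 4.
    rewrite /lb -Hsc //; apply: Hcx => i; rewrite !mxE mulrC.
    apply: le_lt_trans (Hc i) _; rewrite /ee /eta1; lra.
  have qs0 : 0 < q%:R `^ s :> R by rewrite powR_gt0.
  set QS := (q%:R `^ s)^-1.
  have QS0 : 0 < QS by rewrite invr_gt0.
  have ep0 : 0 < e / 4 * q%:R `^ s by rewrite mulr_gt0.
  have QSep : QS * (e / 4 * q%:R `^ s) = e / 4.
    by rewrite /QS; field; rewrite gt_eqF.
  have [nb Hnb] := Hy _ ep0.
  have Hnb1 : forall k, (nb <= k)%N -> fseq s h L k y <= lb + e / 4 * q%:R `^ s.
    by move=> k /Hnb; rewrite ler_norml => /andP[H1 H2]; rewrite /lb; lra.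
  have Hnb2 : forall k, (nb <= k)%N -> lb - e / 4 * q%:R `^ s <= fseq s h L k y.
    by move=> k /Hnb; rewrite ler_norml => /andP[H1 H2]; rewrite /lb; lra.
  have KQ : K * ee < e / 4.
    by move: n1K; rewrite /ee /eta1; lra.
  have [m0 Hm0] := upper_part HA' s0 q0 Hnb1 e40.
  have [m0' Hm0'] := lower_part HA' s0 q0 Hnb2 e40.
  exists (m0 + m0')%N => m Hm.
  have H1 := Hm0 m (leq_trans (leq_addr _ _) Hm).
  have H2 := Hm0' m (leq_trans (leq_addl _ _) Hm).
  rewrite mulrDr QSep -/QS in H1.
  rewrite mulrBr QSep -/QS in H2.
  move: Hz; rewrite ltr_norml => /andP[z1 z2].
  rewrite -/QS -/lb in z1 z2.
  rewrite ler_norml; apply/andP; split; lra.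
Qed.
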